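(* For all positive integers $r$ and $m$, there exist infinitely many primes $p$ such that $pm$ is a Schemmel nontotient number of order $r$, i.e. $pm\notin S_r(\mathbb{N})$.
   Context: For a positive integer $r$, the $r$-th Schemmel totient function $S_r:\mathbb{N}\to\mathbb{N}_0$ is the multiplicative arithmetic function (so $S_r(1)=1$ and $S_r(ab)=S_r(a)S_r(b)$ for coprime $a,b$) defined on prime powers by $S_r(p^{\alpha})=0$ if $p\le r$ and $S_r(p^\alpha)=p^{\alpha-1}(p-r)$ if $p>r$, for all primes $p$ and positive integers $\alpha$. A Schemmel nontotient number of order $r$ is a positive integer not in the range of $S_r$; $G_r$ denotes the set of these. *)

(* Defs.v *)
From mathcomp Require Import all_boot.
Set Implicit Arguments. Unset Strict Implicit. Unset Printing Implicit Defensive.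

Definition schemmel (r n : nat) : nat :=
  \prod_(p <- primes n)
     (if p <= r then 0 else p ^ (logn p n).-1 * (p - r)).

Definition schemmel_nontotient (r m : nat) : Prop :=
  0 < m /\ forall n, 0 < n -> schemmel r n <> m.

(* Main.v *)
Require Import Defs.
From mathcomp Require Import all_boot all_order all_algebra all_fingroup all_solvable all_field zify.
Set Implicit Arguments. Unset Strict Implicit. Unset Printing Implicit Defensive.

Section Part1.
Import GRing.Theory Num.Theory.
Local Open Scope ring_scope.

Lemma Phi_split n e : (0 < e)%N -> (e %| n)%N -> (e < n)%N ->
  exists h : {poly int}, 'X^n - 1 = 'Phi_n * ('X^e - 1) * h.
Proof.
move=> e0 en ltn.
have n0 : (0 < n)%N by apply: leq_trans e0 (ltnW ltn).
rewrite -(prod_Cyclotomic n0) -(prod_Cyclotomic e0).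
rewrite (bigID (fun d => d %| e)%N) /=.
have -> : \prod_(d <- divisors n | (d %| e)%N) 'Phi_d = \prod_(d <- divisors e) 'Phi_d.
  rewrite -big_filter; apply: perm_big; apply: uniq_perm.
  - by rewrite filter_uniq // divisors_uniq.
  - exact: divisors_uniq.
  move=> d; rewrite mem_filter -!dvdn_divisors //.
  apply/andP/idP => [[]//|de]; split => //; exact: dvdn_trans de en.
set A := \prod_(d <- divisors e) 'Phi_d.
rewrite -big_filter (bigD1_seq n); last by rewrite filter_uniq // divisors_uniq.
  by eexists; rewrite mulrCA mulrA.
rewrite mem_filter -dvdn_divisors // dvdnn andbT.
by apply/negP => /(dvdn_leq e0); rewrite leqNgt ltn.
Qed.

Lemma mapX1 (F : fieldType) n : map_poly (intr : int -> F) ('X^n - 1) = 'X^n - 1.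
Proof. by rewrite rmorphB rmorph1 rmorphXn /= map_polyX. Qed.

Lemma Phi_dvd n : (0 < n)%N -> exists h : {poly int}, 'X^n - 1 = 'Phi_n * h.
Proof.
move=> n0; rewrite -(prod_Cyclotomic n0) (bigD1_seq n) ?divisors_uniq //.
  by eexists.
by rewrite -dvdn_divisors.
Qed.

Lemma intr_Fp0 q (z : int) : prime q -> (q %| `|z|)%N -> (z%:~R : 'F_q) = 0.
Proof.
move=> pq; case: z => k /=.
  by move=> /eqP hk; rewrite -pmulrn -(Fp_nat_mod pq) hk.
move=> /eqP hk; rewrite NegzE intrN -pmulrn -(Fp_nat_mod pq) hk.
by rewrite oppr0.
Qed.

Lemma primes_1_mod n N : (0 < n)%N -> exists q, (N < q)%N /\ prime q /\ (n %| q.-1)%N.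
Proof.
move=> n0.
set P := 'Phi_n * ('Phi_n - 1) * ('Phi_n + 1).
have sz : (1 < size 'Phi_n)%N by rewrite size_Cyclotomic ltnS totient_gt0.
have Pn0 : P != 0.
  rewrite !mulf_neq0 //.
  - by rewrite -size_poly_eq0 -(subnKC (ltnW sz)).
  - by apply/eqP => /eqP; rewrite subr_eq0 => /eqP h; move: sz; rewrite h size_poly1.
  - by apply/eqP => /eqP; rewrite addr_eq0 => /eqP h; move: sz; rewrite h size_polyN size_poly1.
set M := (N + n)`!.
set rs := [seq ((M * i.+1)%N)%:Z | i <- iota 0 (size P)].
have hu : uniq rs.
  rewrite map_inj_uniq ?iota_uniq // => i j /eqP; rewrite eqz_nat.
  by rewrite eqn_mul2l -[M == 0%N]negbK -lt0n fact_gt0 /= => /eqP; case.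
have : ~~ all (root P) rs.
  apply/negP => hall; have := max_poly_roots Pn0 hall hu.
  by rewrite size_map size_iota ltnn.
case/allPn => _ /mapP[i _ ->]; set a := (M * i.+1)%N => Pa.
set z := ('Phi_n).[a%:Z].
have hz : (1 < `|z|)%N.
  move: Pa; rewrite /root /P !hornerE -/z.
  by case: z => [[|[|k]]|[|k]].
set q := pdiv `|z|.
have pq : prime q := pdiv_prime hz.
have Hz : (z%:~R : 'F_q) = 0 := intr_Fp0 pq (pdiv_dvd _).
set phi := map_poly (intr : int -> 'F_q) 'Phi_n.
set x : 'F_q := a%:R.
have xz : x = (a%:Z)%:~R by rewrite /x -pmulrn.
have phix : phi.[x] = 0 by rewrite xz horner_map /= -/z Hz.
have [h hh] := Phi_dvd n0.
have xn : x ^+ n = 1.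
  have := congr1 (fun p => (map_poly (intr : int -> 'F_q) p).[x]) hh.
  rewrite /= mapX1 rmorphM hornerM phix mul0r !hornerE.
  by move/eqP; rewrite subr_eq0 => /eqP.
have x0 : x != 0.
  apply/eqP=> x0; move: xn; rewrite x0 expr0n eqn0Ngt n0 /= => /eqP.
  by rewrite eq_sym oner_eq0.
have qbig : (N + n < q)%N.
  rewrite ltnNge; apply/negP => hq; move/negP: x0; apply.
  rewrite /x -(Fp_nat_mod pq); suff /eqP -> : (q %| a)%N by [].
  by apply: dvdn_mulr; apply: dvdn_fact; rewrite prime_gt0.
have nF : (n%:R : 'F_q) != 0.
  apply/eqP => h0; have := val_Fp_nat pq n; rewrite h0 modn_small /=.
    by move=> h1; move: n0; rewrite -h1.
  exact: leq_ltn_trans (leq_addl N n) qbig.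
suff : (n %| q.-1)%N.
  move=> H; exists q; split => //.
  exact: leq_ltn_trans (leq_addr n N) qbig.
have xU : x \is a GRing.unit by rewrite unitfE.
set u := FinRing.Unit xU.
have valu k : val (u ^+ k)%g = x ^+ k by rewrite FinRing.val_unitX.
have un : (#[u]%g %| n)%N.
  by rewrite order_dvdn; apply/eqP/val_inj; rewrite valu xn.
have uq : (#[u]%g %| q.-1)%N.
  by have := order_dvdG (in_setT u); rewrite card_finField_unit card_Fp.
case: (eqVneq #[u]%g n) => [<-//|ne].
have lt : (#[u]%g < n)%N by rewrite ltn_neqAle ne dvdn_leq.
have [h2 hh2] := Phi_split (order_gt0 u) un lt.
have xe : x ^+ #[u]%g = 1 by rewrite -valu expg_order.
have hX : 'X^n - 1 = phi * ('X^#[u]%g - 1) * map_poly (intr : int -> 'F_q) h2.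
  by rewrite -mapX1 hh2 !rmorphM /= rmorphB rmorph1 rmorphXn /= map_polyX.
have d1 : ('X - x%:P) %| phi by rewrite dvdp_XsubCl /root phix.
have d2 : ('X - x%:P) %| 'X^#[u]%g - 1 by rewrite dvdp_XsubCl /root !hornerE xe subrr.
have H := @separable_nosquare _ _ ('X - x%:P) 2 (separable_Xn_sub_1 nF) isT.
have sz2 : size ('X - x%:P) != 1 by rewrite size_XsubC.
have := H sz2.
by rewrite hX expr2 (dvdp_mulr _ (dvdp_mul d1 d2)).
Qed.

End Part1.

Lemma key r m p : 0 < r -> 0 < m -> prime p -> m + r < p -> (m + r)`! %| p.-1 ->
  forall n, 0 < n -> schemmel r n <> p * m.
Proof.
move=> r0 m0 pp ltp Kp n n0 hS.
have pm0 : 0 < p * m by rewrite muln_gt0 prime_gt0.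
have : p %| schemmel r n by rewrite hS dvdn_mulr.
rewrite /schemmel (Euclid_dvd_prod _ _ _ pp) big_has => /hasP[q qn pq].
set f := fun q => if q <= r then 0 else q ^ (logn q n).-1 * (q - r).
have fq : f q %| p * m.
  rewrite -hS /schemmel (bigD1_seq q) ?primes_uniq //=; exact: dvdn_mulr.
have qpr : prime q by move: qn; rewrite mem_primes => /andP[].
have kq : 0 < logn q n by rewrite logn_gt0.
have fq0 : f q != 0 by apply/eqP => h; move: fq; rewrite h dvd0n => /eqP h2; move: pm0; rewrite h2.
have qr : r < q by move: fq0; rewrite /f; case: leqP.
move: fq pq; rewrite /f leqNgt qr /= (Euclid_dvdM _ _ pp) => fq /orP[].
  rewrite Euclid_dvdX // dvdn_prime2 // => /andP[/eqP pq ke].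
  subst q.
  have : p * (p - r) %| p * m.
    apply: dvdn_trans fq; apply: dvdn_mul => //.
    by rewrite -(prednK ke) expnS dvdn_mulr.
  rewrite dvdn_pmul2l ?prime_gt0 // => /(dvdn_leq m0) => h. lia.
move=> /dvdnP[d hd].
have d0 : 0 < d by move: hd; case: d => //= h; lia.
have dm : d %| m.
  have : p * d %| p * m by apply: dvdn_trans fq; rewrite mulnC -hd dvdn_mull.
  by rewrite dvdn_pmul2l ?prime_gt0.
have dlm := dvdn_leq m0 dm.
have : d + r %| p.-1 by apply: dvdn_trans Kp; apply: dvdn_fact; lia.
move=> /dvdnP[t ht].
have p1 := prime_gt1 pp.
have hq : q = d * p + r by rewrite -hd subnK // ltnW.
have hp : p = t * (d + r) + 1 by rewrite -ht addn1 prednK // prime_gt0.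
have : d + r %| q.
  apply/dvdnP; exists (d * t + 1).
  by rewrite hq {1}hp mulnDr muln1 mulnDl mul1n mulnA addnA.
have d2 : d * 2 <= d * p by rewrite leq_mul2l p1 orbT.
case/primeP: qpr => _ /[apply] /orP[] /eqP h; lia.
Qed.

Theorem theorem1p1 (r m : nat) (hr : 0 < r) (hm : 0 < m) :
  forall N : nat, exists p : nat, N < p /\ prime p /\ schemmel_nontotient r (p * m).
Proof.
move=> N.
have [p [Np [pp Kp]]] := primes_1_mod (N + m + r) (fact_gt0 (m + r)).
exists p; split; first by lia.
split => //; split; first by rewrite muln_gt0 prime_gt0.
by apply: key => //; lia.
Qed.
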